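(* Let $d\ge3$, $h\ge1$, $1\le n\le h$, and let $j_1\ne j_2$ be two vertices at distance $n$ from the root that have the same parent. Then the order of $\bar{\mathbf{x}}_{j_1}-\bar{\mathbf{x}}_{j_2}$ in $G(d,h)$ is $\theta(d,h+2-n)$, where $\theta(d,m):=\frac{(d-1)^m-1}{d-2}$.
   Context: Let $\mathcal{T}(d,h)$ be the rooted tree in which the root $0$ has $d$ children, every vertex at distance $1,\dots,h-1$ from the root has $d-1$ children, and the vertices at distance $h$ are leaves. Let $V$ be its vertex set, $A$ its adjacency matrix, $\Delta := dI-A$, and $\Lambda\subset\mathbb{Z}^V$ the lattice spanned by the rows of $\Delta$. Then $G(d,h):=\mathbb{Z}^V/\Lambda$; $\{\mathbf{x}_i:i\in V\}$ is the standard basis of $\mathbb{Z}^V$ and $\bar{\mathbf{v}}$ denotes the image of $\mathbf{v}\in\mathbb{Z}^V$ in $G(d,h)$. *)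

(* Defs.v *)
From mathcomp Require Import all_boot all_order all_algebra.
Set Implicit Arguments. Unset Strict Implicit. Unset Printing Implicit Defensive.
Import Order.TTheory GRing.Theory Num.Theory.

(* Vertices of T(d,h): a vertex at depth k is encoded by its path of child
   indices (c_0, ..., c_{k-1}) from the root, with c_0 < d (the root has d
   children) and c_i < d-1 for i >= 1 (other internal vertices have d-1
   children); entries at positions >= k are normalised to 0. *)
Definition vraw (d h : nat) := ('I_h.+1 * {ffun 'I_h -> 'I_d})%type.

Definition vvalid (d h : nat) (x : vraw d h) : bool :=
  [forall i : 'I_h, ((x.1 <= i)%N ==> (val (x.2 i) == 0%N))
                    && ((1 <= i)%N ==> (val (x.2 i) < d.-1)%N)].

Definition vertex (d h : nat) := {x : vraw d h | vvalid x}.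

Definition depth d h (v : vertex d h) : nat := val (val v).1.
Definition lab d h (v : vertex d h) : {ffun 'I_h -> 'I_d} := (val v).2.

Definition parentb d h (u v : vertex d h) : bool :=
  (depth v == (depth u).+1) &&
  [forall i : 'I_h, (i < depth u)%N ==> (lab v i == lab u i)].

Definition adj d h (u v : vertex d h) : bool := parentb u v || parentb v u.

Definition Delta d h (u v : vertex d h) : int :=
  ((if u == v then d%:Z else 0) - (if adj u v then 1 else 0))%R.

Definition inLattice d h (z : vertex d h -> int) : Prop :=
  exists c : vertex d h -> int,
    forall v, z v = (\sum_(u : vertex d h) c u * Delta u v)%R.

Definition xb d h (i : vertex d h) : vertex d h -> int :=
  fun v => if v == i then 1%R else 0%R.

(* n is the order of the class of z in G(d,h) = Z^V / Lambda *)
Definition is_order_in_G d h (z : vertex d h -> int) (n : nat) : Prop :=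
  (0 < n)%N /\ inLattice (fun v => (z v *+ n)%R) /\
  forall k : nat, (0 < k)%N -> inLattice (fun v => (z v *+ k)%R) -> (n <= k)%N.

(* theta(d,m) = ((d-1)^m - 1)/(d-2) (exact division for d >= 3) *)
Definition theta (d m : nat) : nat := ((d.-1) ^ m).-1 %/ (d - 2).

(* Main.v *)
Require Import Defs.
From mathcomp Require Import all_boot all_order all_algebra.
From mathcomp Require Import zify ring.
Set Implicit Arguments. Unset Strict Implicit. Unset Printing Implicit Defensive.
Import Order.TTheory GRing.Theory Num.Theory.

Section Theta.
Variable d : nat.
Hypothesis d3 : (3 <= d)%N.
Fixpoint tt (a : nat) : nat := if a is a'.+1 then d.-1 * tt a' + 1 else 0.
Lemma tt_pow a : (d - 2) * tt a + 1 = d.-1 ^ a.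
Proof.
elim: a => [|a IH]; first by rewrite expn0 muln0. rewrite expnS -IH /=. nia.
Qed.
Lemma theta_tt a : theta d a = tt a.
Proof.
rewrite /theta -tt_pow addn1 /= mulKn //. lia.
Qed.
Lemma thetaS a : theta d a.+1 = d.-1 * theta d a + 1.
Proof. by rewrite !theta_tt. Qed.
Lemma theta0 : theta d 0 = 0.
Proof. by rewrite theta_tt. Qed.
End Theta.
Section Vert.
Variables d h : nat.
Hypothesis d3 : (3 <= d)%N.
Implicit Types u v j : vertex d h.

Lemma lab_valid v (i : 'I_h) : ((depth v <= i)%N ==> (val (lab v i) == 0%N))
   && ((1 <= i)%N ==> (val (lab v i) < d.-1)%N).
Proof. by have /forallP := valP v; apply. Qed.

Lemma lab_high v (i : 'I_h) : (depth v <= i)%N -> val (lab v i) = 0%N.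
Proof. by move=> H; have /andP[/implyP/(_ H)/eqP -> _] := lab_valid v i. Qed.

Lemma lab_lt v (i : 'I_h) : (1 <= i)%N -> (val (lab v i) < d.-1)%N.
Proof. by move=> H; have /andP[_ /implyP/(_ H)] := lab_valid v i. Qed.

Lemma depth_le v : (depth v <= h)%N.
Proof. rewrite /depth. have := ltn_ord (val v).1. by []. Qed.

Lemma vertex_eq u v : depth u = depth v ->
  (forall i : 'I_h, (i < depth u)%N -> lab u i = lab v i) -> u = v.
Proof.
move=> Hd Hl; apply: val_inj.
rewrite [val u]surjective_pairing [val v]surjective_pairing.
congr pair; first by apply: val_inj.
apply/ffunP => i. case: (ltnP i (depth u)) => hi; first exact: Hl.
apply: val_inj. have := lab_high hi. rewrite Hd in hi. have := lab_high hi.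
rewrite /lab => -> ->. done.
Qed.

Lemma parent_uniq u u' v : parentb u v -> parentb u' v -> u = u'.
Proof.
move=> /andP[/eqP H1 /forallP L1] /andP[/eqP H2 /forallP L2].
have Hd : depth u = depth u' by apply/eqP; rewrite -eqSS -H1 -H2.
apply: vertex_eq => // i hi.
have /implyP/(_ hi)/eqP <- := L1 i.
by rewrite Hd in hi; have /implyP/(_ hi)/eqP <- := L2 i.
Qed.

Lemma parent_excl u v : parentb u v -> parentb v u -> False.
Proof. move=> /andP[/eqP H1 _] /andP[/eqP H2 _]. lia. Qed.

Definition inT j v := (depth j <= depth v)%N &&
  [forall i : 'I_h, (i < depth j)%N ==> (lab v i == lab j i)].

Lemma inT_refl j : inT j j.
Proof. rewrite /inT leqnn /=. by apply/forallP => i; apply/implyP. Qed.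

Lemma inT_depth j v : inT j v -> (depth j <= depth v)%N.
Proof. by case/andP. Qed.

Lemma inT_eq j v : inT j v -> depth v = depth j -> v = j.
Proof.
move=> /andP[_ /forallP L] Hd. apply: vertex_eq => // i hi.
by rewrite Hd in hi; have /implyP/(_ hi)/eqP := L i.
Qed.

Lemma inT_parent j u v : parentb u v -> inT j v = (v == j) || inT j u.
Proof.
move=> Hp; have /andP[/eqP Hd /forallP Hl] := Hp.
case: eqP => [->|Hne]; first by rewrite inT_refl.
rewrite /=. case: (ltnP (depth u) (depth j)) => Hdj.
  have -> : inT j u = false by apply/negbTE/negP => /inT_depth; lia.
  apply/negbTE/negP => Hv. have Hdv := inT_depth Hv.
  apply: Hne; apply: inT_eq => //. lia.
rewrite /inT. have -> : (depth j <= depth v)%N by lia. rewrite Hdj /=.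
apply: eq_forallb => i. case: (ltnP i (depth j)) => hi //=.
have hi' : (i < depth u)%N by lia.
by have /implyP/(_ hi')/eqP -> := Hl i.
Qed.

Lemma parent_exists v : (0 < depth v)%N -> exists u, parentb u v.
Proof.
move=> Hv.
have d0 : (0 < d)%N by lia.
pose z : 'I_d := Ordinal d0.
pose r : vraw d h := (inord (depth v).-1,
   [ffun i : 'I_h => if (i < (depth v).-1)%N then lab v i else z]).
have Hk : val r.1 = (depth v).-1.
  rewrite /= inordK //. have := depth_le v. lia.
have Pr : vvalid r.
  apply/forallP => i; rewrite Hk /= ffunE.
  case: ifP => hi.
    apply/andP; split; apply/implyP => h1; first lia. exact: lab_lt.
  apply/andP; split; apply/implyP => h1 //=. rewrite /z /=. lia.
exists (exist _ r Pr). apply/andP; split.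
  rewrite /depth /= Hk. apply/eqP. by rewrite prednK.
apply/forallP => i; apply/implyP => hi.
rewrite /lab /= ffunE. rewrite /depth /= Hk in hi. by rewrite hi.
Qed.


Definition craw v (c : 'I_d.-1) : vraw d h := (inord (depth v).+1,
  [ffun i : 'I_h => if nat_of_ord i == depth v then widen_ord (leq_pred d) c else lab v i]).
Definition child v c : vertex d h := insubd v (craw v c).

Section Child.
Variable v : vertex d h.
Hypothesis Hv1 : (1 <= depth v)%N.
Hypothesis Hvh : (depth v < h)%N.

Lemma craw1 c : val (craw v c).1 = (depth v).+1.
Proof. by rewrite /= inordK. Qed.

Lemma craw_valid c : vvalid (craw v c).
Proof.
apply/forallP => i; rewrite craw1 /= ffunE.
case: ifP => /eqP hi.
  apply/andP; split; apply/implyP => h1; first lia. rewrite /=. exact: ltn_ord.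
apply/andP; split; apply/implyP => h1.
  apply/eqP; apply: lab_high; lia.
exact: lab_lt.
Qed.

Lemma child_val c : val (child v c) = craw v c.
Proof. rewrite /child insubdK //. exact: craw_valid. Qed.

Lemma child_depth c : depth (child v c) = (depth v).+1.
Proof. by rewrite /depth child_val craw1. Qed.

Lemma child_lab c i : lab (child v c) i =
   if nat_of_ord i == depth v then widen_ord (leq_pred d) c else lab v i.
Proof. by rewrite /lab child_val ffunE. Qed.

Lemma child_parent c : parentb v (child v c).
Proof.
apply/andP; split; first by rewrite child_depth.
apply/forallP => i; apply/implyP => hi. rewrite child_lab.
case: ifP => [/eqP E|_] //. by move: hi; rewrite -E ltnn.
Qed.

Lemma child_inj : injective (child v).
Proof.
move=> c c' E. pose i : 'I_h := Ordinal Hvh.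
have := congr1 (fun u => val (lab u i)) E. rewrite /= !child_lab /= eqxx /=.
by move=> /val_inj.
Qed.

Lemma parent_child u : parentb v u -> u \in codom (child v).
Proof.
move=> /andP[/eqP Hd /forallP Hl].
pose i : 'I_h := Ordinal Hvh.
have Hc : (val (lab u i) < d.-1)%N by apply: lab_lt.
apply/codomP; exists (Ordinal Hc).
apply: vertex_eq; first by rewrite child_depth.
move=> k hk. rewrite child_lab. case: eqP => hk2.
  apply: val_inj => /=. by congr (val (lab u _)); apply: val_inj.
have hk3 : (k < depth v)%N by lia.
by have /implyP/(_ hk3)/eqP := Hl k.
Qed.

Lemma card_children : #|[pred u | parentb v u]| = d.-1.
Proof.
rewrite -[RHS]card_ord -(card_codom child_inj).
apply: eq_card => u; rewrite inE. apply/idP/idP; first exact: parent_child.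
by move/codomP=> [c ->]; apply: child_parent.
Qed.
End Child.


Lemma adj_split u v : ((if adj v u then 1 else 0)%R : int) =
  ((if parentb v u then 1 else 0) + (if parentb u v then 1 else 0) : int)%R.
Proof.
rewrite /adj. case: (boolP (parentb v u)) => H1; case: (boolP (parentb u v)) => H2 //=.
exfalso; exact: parent_excl H1 H2.
Qed.

Lemma sum_adj v (F : vertex d h -> int) :
  (\sum_u Delta v u * F u = d%:Z * F v - \sum_(u | parentb v u) F u
      - \sum_(u | parentb u v) F u)%R.
Proof.
rewrite /Delta. under eq_bigr => u _ do rewrite mulrBl.
rewrite sumrB (bigD1 v) //= eqxx big1; last first.
  by move=> u /negbTE; rewrite eq_sym => ->; rewrite mul0r.
rewrite addr0 !(big_mkcond (fun u => parentb _ _)) -addrA -opprD -big_split /=.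
congr (_ - _)%R; apply: eq_bigr => u _. rewrite adj_split mulrDl.
by congr (_ + _)%R; case: ifP; rewrite ?mul1r ?mul0r.
Qed.

Definition W j u : int := if inT j u then Posz (theta d (h.+1 - depth u)) else 0%R.

Lemma sum_const_pred (P : pred (vertex d h)) (c : int) :
  (\sum_(u | P u) c = c *+ #|[pred u | P u]|)%R.
Proof. by rewrite -sumr_const; apply: eq_bigl => u; rewrite inE. Qed.


Lemma theta_id a : (Posz d * Posz (theta d a.+1) - Posz (d.-1 * theta d a))%R
   = Posz (theta d a.+2).
Proof.
rewrite !thetaS //. set X := theta d a.
have [e ->] : exists e, d = e.+1 by exists d.-1; lia.
rewrite /=. lia.
Qed.

Section DW.
Variables (j p : vertex d h).
Hypothesis Hj1 : (1 <= depth j)%N.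
Hypothesis Hpj : parentb p j.

Lemma inT_p : inT j p = false.
Proof.
apply/negbTE/negP => /inT_depth. move: Hpj => /andP[/eqP H _]. lia.
Qed.

Lemma Sch_in v : inT j v ->
  (\sum_(u | parentb v u) W j u = Posz (d.-1 * theta d (h - depth v)))%R.
Proof.
move=> Hv.
have E : forall u, parentb v u -> W j u = Posz (theta d (h - depth v)).
  move=> u Hu. rewrite /W (inT_parent j Hu) Hv orbT.
  by move: Hu => /andP[/eqP -> _]; rewrite subSS.
rewrite (eq_bigr _ E) sum_const_pred.
case: (ltnP (depth v) h) => Hvh.
  rewrite card_children //; last by have := inT_depth Hv; lia.
  by rewrite PoszM -mulr_natl natz.
have -> : h - depth v = 0 by lia.
by rewrite theta0 // mul0rn muln0.
Qed.

Lemma Sch_out v : ~~ inT j v ->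
  (\sum_(u | parentb v u) W j u = if v == p then Posz (theta d (h.+1 - depth j)) else 0)%R.
Proof.
move=> Hv.
have E : forall u, parentb v u -> W j u = if u == j then Posz (theta d (h.+1 - depth j)) else 0%R.
  move=> u Hu. rewrite /W (inT_parent j Hu) (negbTE Hv) orbF.
  by case: eqP => // ->.
rewrite (eq_bigr _ E) -big_mkcondr /=.
case: (boolP (v == p)) => Hvp.
  rewrite (big_pred1 j) // => u /=. rewrite (eqP Hvp).
  case: (boolP (u == j)) => [/eqP -> |]; first by rewrite Hpj.
  by rewrite andbF.
rewrite big1 // => u /andP[Hu /eqP Euj]. subst u.
by rewrite (parent_uniq Hu Hpj) eqxx in Hvp.
Qed.

Lemma Spar_j : (\sum_(u | parentb u j) W j u = 0)%R.
Proof.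
apply: big1 => u Hu. rewrite /W.
case: ifP => // /inT_depth. move: Hu => /andP[/eqP H _]. lia.
Qed.

Lemma Spar_out v : ~~ inT j v -> (\sum_(u | parentb u v) W j u = 0)%R.
Proof.
move=> Hv. apply: big1 => u Hu. rewrite /W.
by rewrite (inT_parent j Hu) negb_or in Hv; case/andP: Hv => _ /negbTE ->.
Qed.

Lemma Spar_in v : inT j v -> v != j ->
  (\sum_(u | parentb u v) W j u = Posz (theta d (h.+2 - depth v)))%R.
Proof.
move=> Hv Hvj.
have Hdv : (1 <= depth v)%N by have := inT_depth Hv; lia.
have [q Hq] := parent_exists Hdv.
rewrite (big_pred1 q); last first.
  move=> u /=. apply/idP/idP => [Hu|/eqP ->//]. by rewrite (parent_uniq Hu Hq).
rewrite /W. rewrite (inT_parent j Hq) (negbTE Hvj) /= in Hv. rewrite Hv.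
by move: Hq => /andP[/eqP -> _]; rewrite subSS.
Qed.

Lemma DeltaW v :
  (\sum_u Delta v u * W j u = (if v == j then Posz (theta d (h.+2 - depth j)) else 0)
     - (if v == p then Posz (theta d (h.+1 - depth j)) else 0))%R.
Proof.
rewrite sum_adj.
case: (boolP (inT j v)) => Hv.
  have Hvp : (v == p) = false.
    by apply/negbTE/negP => /eqP E; rewrite E inT_p in Hv.
  rewrite Hvp subr0 Sch_in //.
  have Hvh := depth_le v.
  have Hjv := inT_depth Hv.
  case: (boolP (v == j)) => [/eqP E|Hvj].
    subst v. rewrite Spar_j subr0 /W inT_refl.
    have -> : h.+1 - depth j = (h - depth j).+1 by lia.
    have -> : h.+2 - depth j = (h - depth j).+2 by lia.
    exact: theta_id.
  rewrite Spar_in // /W Hv.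
  have -> : h.+1 - depth v = (h - depth v).+1 by lia.
  have -> : h.+2 - depth v = (h - depth v).+2 by lia.
  rewrite -theta_id. lia.
have Hvj : (v == j) = false.
  by apply/negbTE/negP => /eqP E; rewrite E inT_refl in Hv.
rewrite Hvj Sch_out // Spar_out // /W (negbTE Hv). rewrite mulr0. lia.
Qed.
End DW.

End Vert.

Section Helpers.
Local Open Scope ring_scope.

Lemma Delta_sym d h (u v : vertex d h) : Delta u v = Delta v u.
Proof. by rewrite /Delta eq_sym /adj orbC. Qed.

Lemma key d h (d3 : (3 <= d)%N) (a b p : vertex d h) :
  (1 <= depth a)%N -> depth b = depth a -> parentb p a -> parentb p b ->
  forall v, \sum_u Delta v u * (W a u - W b u) =
    (if v == a then Posz (theta d (h.+2 - depth a)) else 0)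
    - (if v == b then Posz (theta d (h.+2 - depth a)) else 0).
Proof.
move=> Ha Hb Hpa Hpb v.
under eq_bigr do rewrite mulrBr.
rewrite sumrB (DeltaW d3 Ha Hpa) (DeltaW d3 _ Hpb); last by rewrite Hb.
rewrite Hb. lia.
Qed.

Lemma W_self d h (a : vertex d h) : W a a = Posz (theta d (h.+1 - depth a)).
Proof. by rewrite /W inT_refl. Qed.

Lemma W_other d h (a b : vertex d h) : depth a = depth b -> a != b -> W a b = 0.
Proof.
move=> H Hne. rewrite /W. case: ifP => // Hi.
by rewrite (inT_eq Hi) ?eqxx // in Hne.
Qed.

Lemma third_child d h (p a b : vertex d h) : (3 <= d)%N -> (depth p < h)%N ->
  ((1 <= depth p)%N -> (4 <= d)%N) -> exists u, [&& parentb p u, u != a & u != b].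
Proof.
move=> d3 Hph H4.
pose i : 'I_h := Ordinal Hph.
have [c [Hc [Hca Hcb]]] : exists c, (c < 3)%N /\ c <> val (lab a i) /\ c <> val (lab b i).
  set x := val (lab a i); set y := val (lab b i).
  case: (eqVneq x 0%N) => hx0; case: (eqVneq y 0%N) => hy0;
  case: (eqVneq x 1%N) => hx1; case: (eqVneq y 1%N) => hy1;
  first [ (exists 0%N; lia) | (exists 1%N; lia) | (exists 2%N; lia) ].
have Hcd : (c < d)%N by lia.
pose r : vraw d h := (inord (depth p).+1,
   [ffun k : 'I_h => if nat_of_ord k == depth p then Ordinal Hcd else lab p k]).
have Hk : val r.1 = (depth p).+1 by rewrite /= inordK.
have Pr : vvalid r.
  apply/forallP => k; rewrite Hk /= ffunE.
  case: ifP => /eqP hk.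
    apply/andP; split; apply/implyP => h1; first lia.
    rewrite /=. have := H4; lia.
  apply/andP; split; apply/implyP => h1.
    apply/eqP; apply: lab_high; lia.
  exact: lab_lt.
have Hlab : val (lab (exist _ r Pr) i) = c by rewrite /lab /= ffunE /= eqxx.
exists (exist _ r Pr). apply/and3P; split.
- apply/andP; split; first by rewrite /depth /= Hk.
  apply/forallP => k; apply/implyP => hk. rewrite /lab /= ffunE.
  case: ifP => [/eqP E|_] //. by move: hk; rewrite -E ltnn.
- by apply/negP => /eqP E; apply: Hca; rewrite -Hlab E.
- by apply/negP => /eqP E; apply: Hcb; rewrite -Hlab E.
Qed.

Lemma coprime_theta d a : (3 <= d)%N -> coprime (theta d a.+1) (theta d a).
Proof.
move=> d3. rewrite thetaS // /coprime -gcdn_modl.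
by rewrite -modnDml modnMl add0n gcdn_modl gcd1n.
Qed.

Lemma odd_theta d a : (3 <= d)%N -> odd d -> odd (theta d a.+1).
Proof.
move=> d3 Hd. rewrite thetaS // addn1 /= oddM.
have -> : odd d.-1 = false by move: Hd; case: d d3 => //= d' _; case: (odd d').
by [].
Qed.

Lemma sum_xb d h (j : vertex d h) (f : vertex d h -> int) :
  \sum_v xb j v * f v = f j.
Proof.
rewrite (bigD1 j) //= /xb eqxx mul1r big1 ?addr0 // => v /negbTE ->.
by rewrite mul0r.
Qed.

Lemma lower_div d h (d3 : (3 <= d)%N) (j1 j2 b p : vertex d h) (k : nat) :
  (1 <= depth j1)%N -> depth b = depth j1 ->
  parentb p j1 -> parentb p b -> b != j1 ->
  inLattice (fun v => (xb j1 v - xb j2 v) *+ k) ->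
  (Posz (theta d (h.+2 - depth j1)) %|
     (W j1 j1 - W b j1 - (W j1 j2 - W b j2)) *+ k)%Z.
Proof.
move=> H1 Hb Hp1 Hpb Hbj [c Hc].
set w := fun u => W j1 u - W b u.
have E1 : \sum_v ((xb j1 v - xb j2 v) *+ k) * w v = (w j1 - w j2) *+ k.
  under eq_bigr do rewrite -mulr_natr -mulrA (mulrC _ (w _)) mulrA.
  rewrite -mulr_suml mulr_natr. congr (_ *+ _).
  under eq_bigr do rewrite mulrBl. by rewrite sumrB !sum_xb.
have E2 : \sum_v ((xb j1 v - xb j2 v) *+ k) * w v =
   \sum_u c u * \sum_v Delta u v * w v.
  under eq_bigr do rewrite Hc mulr_suml.
  rewrite exchange_big /=. apply: eq_bigr => u _. rewrite mulr_sumr.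
  by apply: eq_bigr => v _; rewrite mulrA.
have E3 := key d3 H1 Hb Hp1 Hpb.
rewrite E1 in E2.
have -> : (W j1 j1 - W b j1 - (W j1 j2 - W b j2)) *+ k = (w j1 - w j2) *+ k by [].
rewrite E2. under eq_bigr do rewrite E3 mulrBr. rewrite sumrB.
set T := Posz _.
have S : forall a : vertex d h, \sum_u c u * (if u == a then T else 0) = c a * T.
  move=> a. rewrite (bigD1 a) //= eqxx big1 ?addr0 // => u /negbTE ->.
  by rewrite mulr0.
rewrite !S -mulrBl. apply: dvdz_mull. exact: dvdzz.
Qed.

Lemma ifmul (c : bool) (t : nat) : (if c then 1 else 0 : int) *+ t = if c then Posz t else 0.
Proof. by case: c; rewrite ?mul0rn // natz. Qed.

End Helpers.

Theorem proposition7p6 (d h n : nat) (j1 j2 : vertex d h) :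
  (3 <= d)%N -> (1 <= h)%N -> (1 <= n)%N -> (n <= h)%N ->
  depth j1 = n -> depth j2 = n -> j1 <> j2 ->
  (exists p : vertex d h, parentb p j1 && parentb p j2) ->
  is_order_in_G (fun v => (xb j1 v - xb j2 v)%R) (theta d (h + 2 - n)).
Proof.
move=> d3 h1 n1 nh Hd1 Hd2 Hne [p /andP[Hp1 Hp2]].
have Eth : theta d (h + 2 - n) = theta d (h.+2 - depth j1) by rewrite Hd1 addn2.
have Hm : h + 2 - n = (h - n).+2 by lia.
have Hne' : j1 != j2 by apply/eqP.
have H1 : (1 <= depth j1)%N by rewrite Hd1.
have Hd21 : depth j2 = depth j1 by rewrite Hd1 Hd2.
split; first by rewrite Hm thetaS // addn1.
split.
  exists (fun u => W j1 u - W j2 u)%R => v.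
  rewrite (eq_bigr (fun u => Delta v u * (W j1 u - W j2 u))%R); last first.
    by move=> u _; rewrite Delta_sym mulrC.
  rewrite (key d3 H1 Hd21 Hp1 Hp2) /xb mulrnBl !ifmul -Eth //.
move=> k k0 Hk.
have Hpd : depth p = n.-1 by move: Hp1 => /andP[/eqP E _]; lia.
have Hth' : theta d (h.+1 - n) = theta d (h - n).+1 by congr theta; lia.
have Hcop : coprime (theta d (h + 2 - n)) (theta d (h.+1 - n)).
  by rewrite Hm Hth'; apply: coprime_theta.
have Wjj : W j1 j1 = Posz (theta d (h.+1 - n)) by rewrite W_self Hd1.
have W12 : W j1 j2 = 0%R by apply: W_other; [rewrite Hd21 | ].
have PM : forall a b : nat, (Posz a *+ b)%R = Posz (a * b).
  by move=> a b; rewrite PoszM -mulr_natr natz.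
case: (boolP (odd (theta d (h + 2 - n)))) => Hodd.
  have Hj21 : j2 != j1 by rewrite eq_sym.
  have := lower_div d3 H1 Hd21 Hp1 Hp2 Hj21 Hk.
  have W21 : W j2 j1 = 0%R by apply: W_other; [rewrite Hd21 | ].
  have W22 : W j2 j2 = Posz (theta d (h.+1 - n)) by rewrite W_self Hd2.
  rewrite Wjj W12 W21 W22 subr0 sub0r opprK -PoszD PM -Eth /dvdz /=.
  rewrite unfold_in /= addnn -mul2n -mulnA Gauss_dvdr ?coprimen2 // Gauss_dvdr //. by apply: dvdn_leq.
have Hdeven : ~~ odd d.
  apply/negP => Hd. move: Hodd. by rewrite Hm odd_theta.
have [u /and3P[Hpu Hu1 Hu2]] : exists u, [&& parentb p u, u != j1 & u != j2].
  apply: third_child => //; first lia.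
  move=> _. have Hd3 : d != 3%N by apply/eqP => E; rewrite E in Hdeven. lia.
have Hdu : depth u = depth j1.
  move: Hpu Hp1 => /andP[/eqP -> _] /andP[/eqP -> _]. done.
have := lower_div d3 H1 Hdu Hp1 Hpu Hu1 Hk.
have Wu1 : W u j1 = 0%R by apply: W_other.
have Wu2 : W u j2 = 0%R by apply: W_other; [rewrite Hdu Hd21|].
rewrite Wjj W12 Wu1 Wu2 !subr0 PM -Eth /dvdz /=.
rewrite unfold_in /= Gauss_dvdr //. by apply: dvdn_leq.
Qed.
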